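(* Let $p\ge1$ be an integer and run the $p$-Pass algorithm with arbitrary orderings of $V$ in each pass. Then its output $S_p$ satisfies $|S_p|\le k$ and $f(S_p)\ge\big(1-(\tfrac{p}{p+1})^p\big)\mathrm{OPT}$.
   Context: $V$ is a finite ground set with $|V|=n$; $f:2^V\to\mathbb{R}_{\ge0}$ is monotone, submodular and normalized; $f(e\mid Y)=f(Y\cup\{e\})-f(Y)$. $k\le n$ is a positive integer and $\mathrm{OPT}=\max\{f(S):S\subseteq V,|S|\le k\}$. $p$-Pass algorithm (knows $\mathrm{OPT}$): start with $S=\emptyset$; for $i=1,\dots,p$, make a pass over all elements of $V$ (in some order) and add each element $e$ to $S$ if $|S|<k$ and $f(e\mid S)\ge(\frac{p}{p+1})^i\cdot\frac{\mathrm{OPT}}{k}$; return $S$. $S_i$ denotes the set $S$ after the $i$-th pass. *)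

(* Defs.v *)
From HB Require Import structures.
From mathcomp Require Import all_boot all_order all_algebra.
Set Implicit Arguments. Unset Strict Implicit. Unset Printing Implicit Defensive.
Import Order.TTheory GRing.Theory Num.Theory.
Local Open Scope ring_scope.

Section PPass.
Variables (R : realFieldType) (V : finType).

Definition marg (f : {set V} -> R) (e : V) (Y : {set V}) : R := f (e |: Y) - f Y.

Definition monotone_set (f : {set V} -> R) : Prop :=
  forall A B : {set V}, A \subset B -> f A <= f B.

Definition submodular (f : {set V} -> R) : Prop :=
  forall (A B : {set V}) (e : V), A \subset B -> e \notin B -> marg f e B <= marg f e A.

Definition normalized (f : {set V} -> R) : Prop := f set0 = 0.

Definition nonneg_set (f : {set V} -> R) : Prop := forall S, 0 <= f S.

(* OPT = max { f S : |S| <= k } (nonempty range: S = set0; f >= 0, so the default 0 is harmless) *)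
Definition OPT (f : {set V} -> R) (k : nat) : R :=
  \big[Num.max/0]_(S : {set V} | (#|S| <= k)%N) f S.

Definition pass (f : {set V} -> R) (k : nat) (tau : R) (ord : seq V) (S : {set V}) : {set V} :=
  foldl (fun (S : {set V}) (e : V) => if (#|S| < k)%N && (tau <= marg f e S) then e |: S else S) S ord.

Definition threshold (p k : nat) (opt : R) (i : nat) : R :=
  (p%:R / (p.+1)%:R) ^+ i * opt / k%:R.

(* S_i : the set after the i-th pass; ords i is the ordering used in pass i (i = 1..p) *)
Fixpoint S_after (f : {set V} -> R) (k p : nat) (ords : nat -> seq V) (i : nat) : {set V} :=
  match i with
  | 0 => set0
  | i'.+1 => pass f k (threshold p k (OPT f k) i) (ords i) (S_after f k p ords i')
  end.

End PPass.

(* Main.v *)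
Require Import Defs.
From HB Require Import structures.
From mathcomp Require Import all_boot all_order all_algebra.
From mathcomp Require Import ring lra zify.
Import Order.TTheory GRing.Theory Num.Theory.
Local Open Scope ring_scope.

Section Aux.
Variables (R : realFieldType) (V : finType) (f : {set V} -> R).

Lemma setU1_in (e : V) (S : {set V}) : e \in S -> e |: S = S.
Proof. by move=> eS; apply/setP => x; rewrite !inE; case: eqP => // ->. Qed.

Lemma marg_in e (S : {set V}) : e \in S -> marg f e S = 0.
Proof. by move=> eS; rewrite /marg setU1_in // subrr. Qed.

Lemma pass_sub k tau ord (S : {set V}) : S \subset pass f k tau ord S.
Proof.
rewrite /pass; elim: ord S => [|e ord IH] S /=; first exact: subxx.
apply: subset_trans (IH _); case: ifP => _ //; exact: subsetU1.
Qed.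

Lemma pass_card k tau ord (S : {set V}) : (#|S| <= k)%N -> (#|pass f k tau ord S| <= k)%N.
Proof.
rewrite /pass; elim: ord S => [|e ord IH] S //= HS; apply: IH.
case: ifP => // /andP[H _]; rewrite cardsU1; case: (e \in S) => /=; lia.
Qed.

Lemma pass_gain k tau ord (S : {set V}) :
  f S - tau * #|S|%:R <= f (pass f k tau ord S) - tau * #|pass f k tau ord S|%:R.
Proof.
rewrite /pass; elim: ord S => [|e ord IH] S //=; apply: le_trans (IH _).
case: ifP => // /andP[_ H]; rewrite cardsU1.
case: (boolP (e \in S)) => eS /=; first by rewrite setU1_in.
rewrite /marg in H; rewrite natrD mulrDr; lra.
Qed.

Hypothesis f_sub : submodular f.

Lemma pass_low k tau ord (S : {set V}) : (#|pass f k tau ord S| < k)%N ->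
  forall e, e \in ord -> e \in pass f k tau ord S \/ marg f e (pass f k tau ord S) < tau.
Proof.
elim: ord S => [|e ord IH] S //= Hc x; rewrite inE => /orP[/eqP->|xo]; last exact: IH.
have sub1 := pass_sub k tau ord (if (#|S| < k)%N && (tau <= marg f e S) then e |: S else S).
move: Hc sub1; rewrite /pass /= => Hc sub1.
set S' := foldl _ _ _ in Hc sub1 *.
have sSS' : S \subset S'.
  apply: subset_trans sub1; case: ifP => _ //; exact: subsetU1.
case: (boolP (e \in S')) => eS'; first by left.
right; move: sub1; case: ifP => [_ sub1|].
  by move: eS'; have := subsetP sub1 e; rewrite setU11 => H /negP; case; apply: H.
have cS : (#|S| < k)%N by apply: leq_ltn_trans Hc; exact: subset_leq_card.
rewrite cS /= => /negbT; rewrite -ltNge => lt _.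
by apply: le_lt_trans lt; apply: f_sub.
Qed.

End Aux.

Section Aux2.
Variables (R : realFieldType) (V : finType) (f : {set V} -> R).
Hypothesis f_sub : submodular f.
Hypothesis f_mono : monotone_set f.
Hypothesis f_nonneg : nonneg_set f.

Lemma cover_bound (S : {set V}) (tau : R) :
  (forall e, e \in S \/ marg f e S < tau) -> 0 <= tau ->
  forall T : {set V}, f T <= f S + #|T|%:R * tau.
Proof.
move=> He tau0 T.
suff H : forall s : seq V, f (S :|: [set x in s]) <= f S + (size s)%:R * tau.
  rewrite cardE; apply: le_trans _ (H (enum T)); rewrite set_enum.
  apply: f_mono; exact: subsetUr.
elim => [|e s IH] /=.
  have -> : S :|: [set x in [::]] = S by apply/setP => x; rewrite !inE orbF.
  by rewrite mul0r addr0.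
have -> : S :|: [set x in e :: s] = e |: (S :|: [set x in s]).
  by apply/setP => x; rewrite !inE; case: (x == e); rewrite ?orbT.
set X := S :|: [set x in s] in IH *.
suff : marg f e X <= tau by rewrite /marg -natr1 mulrDl mul1r; lra.
case: (boolP (e \in X)) => eX; first by rewrite marg_in.
have le : marg f e X <= marg f e S by apply: f_sub => //; exact: subsetUl.
case: (He e) => [eS|]; last by move=> lt; apply: le_trans le (ltW lt).
by move: eX; rewrite inE eS.
Qed.

Lemma OPT_ge0 k : 0 <= OPT f k.
Proof. rewrite /OPT; elim/big_ind: _ => // x y hx hy; rewrite le_max hx //. Qed.

Lemma OPT_le k (B : R) : 0 <= B -> (forall T : {set V}, (#|T| <= k)%N -> f T <= B) -> OPT f k <= B.
Proof. move=> B0 H; rewrite /OPT; elim/big_ind: _ => // x y hx hy; rewrite ge_max hx //. Qed.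

End Aux2.

Lemma alg1 (R : realFieldType) (p k j n x O : R) : p != 0 -> k != 0 -> p + 1 != 0 ->
  (1-x)*O + (p/(p+1))*x*O*(n/k - j/p) - ((1 - (p/(p+1))*x)*O + (p/(p+1))*((p/(p+1))*x)*O*(n/k - (j+1)/p))
  = ((p/(p+1))*x - (p/(p+1))*((p/(p+1))*x))*O*(n/k - (j+1)/p).
Proof. move=> *; field; by apply/and3P. Qed.

Lemma alg2 (R : realFieldType) (j x O : R) : j + 1 != 0 -> j + 1 + 1 != 0 ->
  (1-x)*O + ((j+1)/(j+1+1))*x*O*(1 - j/(j+1)) = (1 - ((j+1)/(j+1+1))*x)*O.
Proof. move=> *; field; by apply/andP. Qed.

Lemma alg3 (R : realFieldType) (p k j n1 n0 x y O : R) : p != 0 -> k != 0 ->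
  (1-y)*O + x*O*(n1/k - j/p) = (1-y)*O + x*O*(n0/k - j/p) + x*O/k*(n1 - n0).
Proof. move=> *; field; by apply/andP. Qed.

Lemma natfrac (R : realFieldType) (n k a p : nat) : (0 < k)%N -> (0 < p)%N ->
  (a * k <= n * p)%N -> 0 <= (n%:R / k%:R - a%:R / p%:R : R).
Proof.
move=> k0 p0 H.
have -> : (n%:R / k%:R - a%:R / p%:R : R) = ((n * p)%N%:R - (a * k)%N%:R) / (k%:R * p%:R).
  rewrite !natrM; field; by rewrite !pnatr_eq0 -!lt0n k0 p0.
apply: divr_ge0; last by rewrite -natrM ler0n.
by rewrite subr_ge0 ler_nat.
Qed.

Lemma natfrac' (R : realFieldType) (n k a p : nat) : (0 < k)%N -> (0 < p)%N ->
  (n * p < a * k)%N -> (n%:R / k%:R - a%:R / p%:R : R) <= 0.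
Proof.
move=> k0 p0 H.
have -> : (n%:R / k%:R - a%:R / p%:R : R) = ((n * p)%N%:R - (a * k)%N%:R) / (k%:R * p%:R).
  rewrite !natrM; field; by rewrite !pnatr_eq0 -!lt0n k0 p0.
apply: mulr_le0_ge0; last by rewrite invr_ge0 -natrM ler0n.
by rewrite subr_le0 ler_nat ltnW.
Qed.

Theorem mainTheorem19 (R : realFieldType) (V : finType) (f : {set V} -> R) (k p : nat)
  (f_nonneg : nonneg_set f) (f_mono : monotone_set f) (f_sub : submodular f)
  (f_norm : normalized f)
  (k_pos : (0 < k)%N) (k_le_n : (k <= #|V|)%N) (p_pos : (1 <= p)%N)
  (ords : nat -> seq V) (ords_perm : forall i, perm_eq (ords i) (enum V)) :
  (#|S_after f k p ords p| <= k)%N /\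
  (1 - (p%:R / (p.+1)%:R) ^+ p) * OPT f k <= f (S_after f k p ords p).
Proof.
set O := OPT f k.
set q : R := p%:R / (p.+1)%:R.
set S := S_after f k p ords.
have O0 : 0 <= O by exact: OPT_ge0.
have q0 : 0 <= q by rewrite divr_ge0.
have q1 : q <= 1 by rewrite /q ler_pdivrMr ?ltr0n // mul1r ler_nat.
have k0 : (k%:R : R) != 0 by rewrite pnatr_eq0 -lt0n.
have kp : (0 : R) < k%:R by rewrite ltr0n.
have Scard : forall i, (#|S i| <= k)%N.
  elim => [|i IH]; first by rewrite /S /= cards0.
  exact: pass_card.
have notfull : forall i, (#|S i.+1| < k)%N -> (1 - q ^+ i.+1) * O <= f (S i.+1).
  move=> i Hc.
  set tau := threshold p k O i.+1.
  have tau0 : 0 <= tau by rewrite /tau /threshold divr_ge0 ?ler0n // mulr_ge0 // exprn_ge0.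
  have Hlow : forall e, e \in S i.+1 \/ marg f e (S i.+1) < tau.
    move=> e; apply: (@pass_low _ _ f f_sub k tau (ords i.+1) (S i) Hc).
    by rewrite (perm_mem (ords_perm _)) mem_enum.
  have HB : O <= f (S i.+1) + k%:R * tau.
    apply: OPT_le; first by apply: addr_ge0 => //; rewrite mulr_ge0.
    move=> T HT; apply: le_trans (@cover_bound _ _ f f_sub f_mono _ _ Hlow tau0 T) _.
    by rewrite lerD2l ler_wpM2r // ler_nat.
  move: HB; have -> : k%:R * tau = q ^+ i.+1 * O by rewrite /tau /threshold; field.
  lra.
pose M (j n : nat) : R := (1 - q ^+ j) * O + q ^+ j.+1 * O * (n%:R / k%:R - j%:R / p%:R).
have inv : forall i, (i < p)%N -> M i #|S i.+1| <= f (S i.+1).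
  elim => [|j IH] Hj.
  - have := pass_gain _ _ f k (threshold p k O 1) (ords 1) (S 0).
    rewrite /S /= cards0 mulr0 subr0 f_norm -/(S 1) => H.
    rewrite /M expr0 subrr mul0r add0r mul0r subr0.
    move: H; rewrite /threshold expr1 -/q => H; lra.
  - have H0 : M j.+1 #|S j.+1| <= f (S j.+1).
      have IH' := IH (ltnW Hj).
      case: (leqP (j.+1 * k) (#|S j.+1| * p)) => Hc.
      + apply: le_trans IH'.
        have E := @alg1 R p%:R k%:R j%:R #|S j.+1|%:R (q ^+ j) O.
        rewrite !natr1 -/q in E.
        rewrite -subr_ge0 /M !exprS E ?pnatr_eq0 -?lt0n //.
        apply: mulr_ge0; last by apply: natfrac => //; lia.
        apply: mulr_ge0 => //; rewrite subr_ge0; apply: ler_piMl => //.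
        by rewrite mulr_ge0 // exprn_ge0.
      + have Hf : (#|S j.+1| < k)%N.
          nia.
        apply: le_trans (notfull j Hf).
        rewrite /M -[X in _ <= X]addr0 lerD2l.
        apply: mulr_ge0_le0; first by rewrite mulr_ge0 // exprn_ge0.
        apply: natfrac' => //; lia.
    have G := pass_gain _ _ f k (threshold p k O j.+2) (ords j.+2) (S j.+1).
    rewrite -/(S j.+2) in G.
    have E3 := @alg3 R p%:R k%:R j.+1%:R #|S j.+2|%:R #|S j.+1|%:R (q ^+ j.+2) (q ^+ j.+1) O.
    move: H0 G; rewrite /M /threshold -/q E3 ?pnatr_eq0 -?lt0n //.
    set a := (1 - _) * O + _; set t := _ / k%:R.
    lra.
have Hp1 : M p.-1 #|S p| <= f (S p).
  have := inv p.-1; rewrite prednK //; apply; lia.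
split; first exact: Scard.
case: (ltngtP #|S p| k) => Hc.
- by have := notfull p.-1; rewrite prednK //; apply.
- by move: (Scard p); rewrite leqNgt Hc.
- apply: le_trans Hp1; rewrite /M Hc.
  set j := p.-1.
  have Ep : p = j.+1 by rewrite prednK.
  have Eqp : q ^+ p = q * q ^+ j by rewrite -exprS prednK.
  have Eq : q = j.+1%:R / j.+2%:R by rewrite /q Ep.
  have Ep' : (p%:R : R) = j.+1%:R by rewrite Ep.
  have E := @alg2 R j%:R (q ^+ j) O.
  rewrite !natr1 -Eq -Ep' in E.
  rewrite divff // Eqp exprS E ?pnatr_eq0 //; lia.
Qed.
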